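(* If $A,B\in\mathcal{D}$ and $d(A)<d(B)$, then there exists $D\in\mathcal{D}$ such that $A\subseteq D\subseteq A\cup B$ and $d(D)=d(B)$.
   Context: $\mathbb{N}=\{1,2,3,\dots\}$. For $A\subseteq\mathbb{N}$ let $A(n)=|A\cap[1,n]|$. Let $\mathcal{D}$ be the collection of all $A\subseteq\mathbb{N}$ for which the asymptotic density $d(A)=\lim_{n\to\infty}\frac{A(n)}{n}$ exists. *)

(* Defs.v *)
(* Subsets of N = {1,2,3,...} are represented by their
   (boolean) characteristic functions nat -> bool; only values at n >= 1
   matter (the value at 0 is ignored by the counting function). *)
From Stdlib Require Import Reals Lra Lia.
Open Scope R_scope.

Fixpoint count_upto (A : nat -> bool) (n : nat) : nat :=
  match n with
  | O => O
  | S m => (count_upto A m + (if A (S m) then 1 else 0))%nat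
  end.

Definition has_density (A : nat -> bool) (l : R) : Prop :=
  Un_cv (fun n => INR (count_upto A n) / INR n) l.

Definition subset_pos (A B : nat -> bool) : Prop :=
  forall n : nat, (1 <= n)%nat -> A n = true -> B n = true.

(* Main.v *)
Require Import Defs.
From Stdlib Require Import Reals.
From Stdlib Require Import Lra Lia Psatz.
Open Scope R_scope.

Lemma upper_inv (a d : nat -> R) (dB K : R) (N : nat) :
  (forall n, d (S n) - d n <= a (S n) - a n \/ d (S n) <= dB * INR (S n) + 1) ->
  1 <= K -> d N <= K + dB * INR N ->
  forall n, (N <= n)%nat -> exists m, (N <= m <= n)%nat /\ d n <= K + dB * INR m + a n - a m.
Proof.
  intros Hs HK H0 n Hn. induction Hn as [|n Hn IH].
  - exists N. split; [lia|lra].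
  - destruct IH as [m [Hm Hd]]. destruct (Hs n) as [H|H].
    + exists m. split; [lia|lra].
    + exists (S n). split; [lia|lra].
Qed.

Lemma lower_inv (b d : nat -> R) (dB L : R) (N : nat) :
  (forall n, d (S n) - d n >= b (S n) - b n \/ d (S n) >= dB * INR (S n)) ->
  L <= 0 -> d N >= L + dB * INR N ->
  forall n, (N <= n)%nat -> exists m, (N <= m <= n)%nat /\ d n >= L + dB * INR m + b n - b m.
Proof.
  intros Hs HK H0 n Hn. induction Hn as [|n Hn IH].
  - exists N. split; [lia|lra].
  - destruct IH as [m [Hm Hd]]. destruct (Hs n) as [H|H].
    + exists m. split; [lia|lra].
    + exists (S n). split; [lia|lra].
Qed.

Lemma bounds_of (x l e n : R) : 0 < n -> Rabs (x / n - l) < e -> (l - e) * n < x < (l + e) * n.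
Proof.
  intros Hn H. set (q := x / n) in H. assert (Hx : x = q * n) by (unfold q; field; lra).
  destruct (Rabs_def2 _ _ H). rewrite Hx. split; nra.
Qed.

Section Constr.
Variables (A B : nat -> bool) (dB : R).

Definition dec (c : nat) (n : nat) : bool :=
  A n || (B n && (if Rlt_dec (INR c) (dB * INR n) then true else false)).

Fixpoint cD (n : nat) : nat :=
  match n with O => O | S m => (cD m + (if dec (cD m) (S m) then 1 else 0))%nat end.

Definition Dset (n : nat) : bool := match n with O => false | S m => dec (cD m) (S m) end.

Lemma count_D n : count_upto Dset n = cD n.
Proof. induction n; simpl; auto. Qed.
End Constr.

Theorem corollary3p6 (A B : nat -> bool) (dA dB : R) :
  has_density A dA -> has_density B dB -> dA < dB ->
  exists (D : nat -> bool),
    has_density D dB /\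
    subset_pos A D /\
    subset_pos D (fun n => orb (A n) (B n)).
Proof.
  intros HA HB Hlt.
  exists (Dset A B dB). split; [|split].
  2:{ intros n Hn H. destruct n; [lia|]. simpl. unfold dec. rewrite H. reflexivity. }
  2:{ intros n Hn H. destruct n; [lia|]. simpl in H. unfold dec in H.
      destruct (A (S n)); auto. destruct (B (S n)); auto. }
  set (a := fun n => INR (count_upto A n)).
  set (b := fun n => INR (count_upto B n)).
  set (d := fun n => INR (cD A B dB n)).
  assert (Hup : forall n, d (S n) - d n <= a (S n) - a n \/ d (S n) <= dB * INR (S n) + 1).
  { intro n. unfold a, d. simpl. rewrite !plus_INR. unfold dec.
    destruct (A (S n)); simpl.
    - left. lra.
    - destruct (B (S n)); simpl.
      + destruct (Rlt_dec _ _) as [r|r].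
        * right. simpl. lra.
        * left. simpl. lra.
      + left. simpl. lra. }
  assert (Hlo : forall n, d (S n) - d n >= b (S n) - b n \/ d (S n) >= dB * INR (S n)).
  { intro n. unfold b, d. simpl. rewrite !plus_INR. unfold dec.
    destruct (A (S n)); simpl.
    - left. destruct (B (S n)); simpl; lra.
    - destruct (B (S n)); simpl.
      + destruct (Rlt_dec _ _) as [r|r].
        * left. simpl. lra.
        * right. simpl. lra.
      + left. simpl. lra. }
  intros eps Heps.
  set (eta := eps / 4).
  assert (Heta : 0 < eta) by (unfold eta; lra).
  destruct (HA eta Heta) as [N1 HN1].
  destruct (HB eta Heta) as [N2 HN2].
  set (N := S (Nat.max N1 N2)).
  set (K := Rmax 1 (d N - dB * INR N)).
  set (L := Rmin 0 (d N - dB * INR N)).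
  assert (HK1 : 1 <= K) by apply Rmax_l.
  assert (HK2 : d N <= K + dB * INR N) by (generalize (Rmax_r 1 (d N - dB * INR N)); unfold K; lra).
  assert (HL1 : L <= 0) by apply Rmin_l.
  assert (HL2 : d N >= L + dB * INR N) by (generalize (Rmin_r 0 (d N - dB * INR N)); unfold L; lra).
  destruct (INR_archimed eta (K - L) Heta) as [N3 HN3].
  exists (Nat.max N N3). intros n Hn.
  assert (HnN : (N <= n)%nat) by lia.
  assert (Hn3 : INR N3 <= INR n) by (apply le_INR; lia).
  assert (Hnpos : 0 < INR n) by (apply lt_0_INR; unfold N in HnN; lia).
  assert (Ha : forall k, (N <= k)%nat -> (dA - eta) * INR k < a k < (dA + eta) * INR k).
  { intros k Hk. apply bounds_of. apply lt_0_INR; unfold N in Hk; lia.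
    apply HN1. unfold N in Hk; lia. }
  assert (Hb : forall k, (N <= k)%nat -> (dB - eta) * INR k < b k < (dB + eta) * INR k).
  { intros k Hk. apply bounds_of. apply lt_0_INR; unfold N in Hk; lia.
    apply HN2. unfold N in Hk; lia. }
  destruct (upper_inv a d dB K N Hup HK1 HK2 n HnN) as [m [Hm Hdm]].
  destruct (lower_inv b d dB L N Hlo HL1 HL2 n HnN) as [m' [Hm' Hdm']].
  assert (Hmn : INR m <= INR n) by (apply le_INR; lia).
  assert (Hmn' : INR m' <= INR n) by (apply le_INR; lia).
  assert (Hm0 : 0 <= INR m) by apply pos_INR.
  assert (Hm0' : 0 <= INR m') by apply pos_INR.
  destruct (Ha n HnN) as [Ha1 Ha2]. destruct (Ha m ltac:(lia)) as [Ha3 Ha4].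
  destruct (Hb n HnN) as [Hb1 Hb2]. destruct (Hb m' ltac:(lia)) as [Hb3 Hb4].
  assert (HU : d n <= K + dB * INR n + 2 * eta * INR n) by nra.
  assert (HLo : d n >= L + dB * INR n - 2 * eta * INR n) by nra.
  assert (HKn : K - L < eta * INR n) by nra.
  unfold R_dist. rewrite count_D. fold (d n).
  set (q := d n / INR n).
  assert (Hq : d n = q * INR n) by (unfold q; field; lra).
  apply Rabs_def1; unfold eta in *; nra.
Qed.
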